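(* Let $A\in\mathbb{R}^{n\times n}$ have all eigenvalues in the open unit disk and let $B\in\mathbb{R}^{n\times m}$. Let $N\geq n+m$ and for $i=1,\dots,N$ let $x_{i,1},x_{i,2}\in\mathbb{R}^{n}$, $u_{i,1}\in\mathbb{R}^{m}$ satisfy $x_{i,2}=Ax_{i,1}+Bu_{i,1}$. Put $X_{N,1}:=(x_{1,1},\dots,x_{N,1})^{\top}$, $X_{N,2}:=(x_{1,2},\dots,x_{N,2})^{\top}$ (in $\mathbb{R}^{N\times n}$), $U_{N,1}:=(u_{1,1},\dots,u_{N,1})^{\top}\in\mathbb{R}^{N\times m}$. Let $(Z_{N,2},Z_{B_{N,1}})\in\mathbb{R}^{N\times n}\times\mathbb{R}^{m\times N}$ be a solution of $X_{N,2}X_{N,1}^{\top}=X_{N,1}Z_{N,2}^{\top}+U_{N,1}Z_{B_{N,1}}$, and let $U_{B_{N,1}}\in\mathbb{R}^{N\times n}$ be a solution of $X_{N,1}U_{B_{N,1}}^{\top}=X_{N,1}X_{N,2}^{\top}-Z_{N,2}X_{N,1}^{\top}$. Let $\hat{A}\in\mathbb{R}^{r\times r}$, $\hat{B}\in\mathbb{R}^{r\times m}$, $\hat{C}\in\mathbb{R}^{n\times r}$, and assume: (a1) $(X_{N,1}^{\dagger}Z_{N,2},X_{N,1}^{\dagger}X_{N,1})$ is a regular matrix pencil; (a2) the spectra of $(X_{N,1}^{\dagger}Z_{N,2},X_{N,1}^{\dagger}X_{N,1})$ and $(I_r,\hat{A})$ are disjoint; (a3) $(X_{N,1}^{\dagger}(X_{N,2}-U_{B_{N,1}}),X_{N,1}^{\dagger}X_{N,1})$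 is a regular matrix pencil; (a4) the spectra of $(X_{N,1}^{\dagger}(X_{N,2}-U_{B_{N,1}}),X_{N,1}^{\dagger}X_{N,1})$ and $(I_r,\hat{A})$ are disjoint; (A2) every eigenvalue $\lambda$ of $\hat{A}$ satisfies $0<|\lambda|<1$; (b1) $\operatorname{rank}\begin{pmatrix}X_{N,1}&U_{N,1}\end{pmatrix}=n+m$; (b2) $\operatorname{rank}X_{N,1}=n$; (b3) $\operatorname{rank}U_{N,1}=m$. Let $P\in\mathbb{R}^{r\times r}$, $Q\in\mathbb{R}^{r\times r}$ be the solutions of $\hat{A}P\hat{A}^{\top}+\hat{B}\hat{B}^{\top}=P$ and $\hat{A}^{\top}Q\hat{A}+\hat{C}^{\top}\hat{C}=Q$. Let $R,S\in\mathbb{R}^{n\times r}$ satisfy $$X_{N,1}^{\dagger}Z_{N,2}R\hat{A}^{\top}+X_{N,1}^{\dagger}Z_{B_{N,1}}^{\top}\hat{B}^{\top}=X_{N,1}^{\dagger}X_{N,1}R,\qquad X_{N,1}^{\dagger}(X_{N,2}-U_{B_{N,1}})S\hat{A}-X_{N,1}^{\dagger}X_{N,1}\hat{C}=X_{N,1}^{\dagger}X_{N,1}S,$$ and let $S_B\in\mathbb{R}^{m\times r}$ satisfy $U_{N,1}S_{B}=U_{B_{N,1}}S$. Define $$\tilde{\nabla}_{\hat{A}}f:=2\big(Q\hat{A}P+(S^{\top}R-S_{B}^{\top}\hat{B}^{\top})(\hat{A}^{\dagger})^{\top}\big),\quad \tilde{\nabla}_{\hat{B}}f:=2(S_{B}^{\top}+Q\hat{B}),\quad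 \tilde{\nabla}_{\hat{C}}f:=2(\hat{C}P-R).$$ Let $R_*,S_*\in\mathbb{R}^{n\times r}$ be the solutions of $AR_*\hat{A}^{\top}+B\hat{B}^{\top}=R_*$ and $A^{\top}S_*\hat{A}-\hat{C}=S_*$. Then $$\tilde{\nabla}_{\hat{A}}f=\nabla_{\hat{A}}f=2(Q\hat{A}P+S_*^{\top}AR_* ),\quad \tilde{\nabla}_{\hat{B}}f=\nabla_{\hat{B}}f=2(S_*^{\top}B+Q\hat{B}),\quad \tilde{\nabla}_{\hat{C}}f=\nabla_{\hat{C}}f=2(\hat{C}P-R_* ).$$
   Context: $M^{\dagger}$ denotes the Moore–Penrose pseudoinverse. A pair $(M,K)$ of square matrices of equal size is a regular matrix pencil if $\det(M-\lambda K)$ is not identically zero in $\lambda$; its spectrum is the set of $\lambda\in\mathbb{C}$ with $\det(M-\lambda K)=0$, together with $\infty$ if $K$ is singular. The spectrum of $(I_r,\hat A)$ is the set of $\lambda\in\mathbb{C}$ with $\det(I_r-\lambda\hat A)=0$ (plus $\infty$ if $\hat A$ is singular). Background: for the system $x_{k+1}=Ax_k+Bu_k$, $y_k=x_k$ with transfer function $H(z)=(zI_n-A)^{-1}B$ and a reduced model with $H_r(z)=\hat{C}(zI_r-\hat{A})^{-1}\hat{B}$, $\hat A$ stable, one has $\|H-H_r\|_{h^2}^2=\operatorname{tr}(\Sigma_c)+f(\hat A,\hat B,\hat C)$ where $A\Sigma_cA^\top+BB^\top=\Sigma_c$ and $f(\hat{A},\hat{B},\hat{C})=\operatorname{tr}(\hat{C}P\hat{C}^{\top})-2\operatorname{tr}(R_*\hat{C}^{\top})$;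 by known results (Van Dooren et al.; Bunse-Gerstner et al.) the entrywise partial-derivative gradients $\nabla_{\hat A}f,\nabla_{\hat B}f,\nabla_{\hat C}f$ of $f$ are given by the formulas $2(Q\hat{A}P+S_*^{\top}AR_* )$, $2(S_*^{\top}B+Q\hat{B})$, $2(\hat{C}P-R_* )$. *)

(* Defs.v *)
From HB Require Import structures.
From mathcomp Require Import all_boot all_order all_algebra.
From mathcomp Require Import complex.
From Stdlib Require Import ClassicalEpsilon.
Set Implicit Arguments. Unset Strict Implicit. Unset Printing Implicit Defensive.
Import Order.TTheory GRing.Theory Num.Theory.
Local Open Scope ring_scope.

Section Defs.
Variable R : rcfType.

Definition cmx (p q : nat) (M : 'M[R]_(p, q)) : 'M[R[i]]_(p, q) :=
  map_mx (fun x => (x%:C)%C) M.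

(* Moore-Penrose pseudoinverse: the (unique) matrix satisfying the four
   Penrose conditions (it always exists over the reals). *)
Definition penrose (p q : nat) (M : 'M[R]_(p, q)) (X : 'M[R]_(q, p)) : Prop :=
  [/\ M *m X *m M = M, X *m M *m X = X,
      (M *m X)^T = M *m X & (X *m M)^T = X *m M].

Definition pinv (p q : nat) (M : 'M[R]_(p, q)) : 'M[R]_(q, p) :=
  match excluded_middle_informative (exists X, penrose M X) with
  | left H => proj1_sig (constructive_indefinite_description _ H)
  | right _ => 0
  end.

Definition regular_pencil (k : nat) (M K : 'M[R]_k) : Prop :=
  \det (map_mx polyC M - 'X *: map_mx polyC K) != 0.

(* spectrum of the pencil (M,K); None stands for the point infinity *)
Definition pencil_spec (k : nat) (M K : 'M[R]_k) (z : option R[i]) : Prop :=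
  match z with
  | Some l => \det (cmx M - l *: cmx K) = 0
  | None => \det K = 0
  end.

Definition spec_disjoint (k l : nat) (M1 K1 : 'M[R]_k) (M2 K2 : 'M[R]_l) : Prop :=
  forall z, ~ (pencil_spec M1 K1 z /\ pencil_spec M2 K2 z).

End Defs.

(* Main.v *)
Require Import Defs.
From HB Require Import structures.
From mathcomp Require Import all_boot all_order all_algebra.
From mathcomp Require Import complex.
Import Order.TTheory GRing.Theory Num.Theory.
Local Open Scope ring_scope.
From Stdlib Require Import ClassicalEpsilon.
Lemma stein_step (F : fieldType) n r (A : 'M[F]_n) (M : 'M[F]_r) (s : seq F) :
  forall D : 'M[F]_(n, r), A *m D *m M = D ->
  (\prod_(l <- s) (A - l%:M)) *m D *m M ^+ size s
   = D *m \prod_(l <- s) (1%:M - l *: M).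
Proof.
elim: s => [|l s IH] D HD.
  by rewrite !big_nil /= expr0 mul1mx mulmx1.
rewrite !big_cons /= exprS.
have HD' : A *m (D *m M) *m M = D *m M by rewrite mulmxA HD.
have E1 : forall (X Y : 'M[F]_n), X * Y = X *m Y by [].
have E2 : forall (X Y : 'M[F]_r), X * Y = X *m Y by [].
rewrite !E1 !E2 -!mulmxA (mulmxA D M) (mulmxA _ (D *m M)) IH //.
rewrite !mulmxA mulmxBl mulmxBl HD.
by rewrite mul_scalar_mx -scalemxAl mulmxBr mulmx1 -scalemxAr.
Qed.

Lemma char_poly_hornerE (F : fieldType) n (A : 'M[F]_n) a :
  (char_poly A).[a] = \det (a%:M - A).
Proof.
rewrite horner_sum; apply: eq_bigr => s _.
rewrite hornerM horner_exp !hornerE; congr (_ * _).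
rewrite (big_morph _ (fun p q => hornerM p q a) (hornerC 1 a)).
by apply: eq_bigr => i _; rewrite !mxE !(hornerE, hornerMn).
Qed.

Lemma stein0 (F : closedFieldType) n r (A : 'M[F]_n) (M : 'M[F]_r)
  (D : 'M[F]_(n,r)) :
  (forall l, \det (A - l%:M) = 0 -> \det (1%:M - l *: M) != 0) ->
  A *m D *m M = D -> D = 0.
Proof.
case: n A D => [|n] A D H HD; first by rewrite flatmx0.
have [s Hs] := closed_field_poly_normal (char_poly A).
rewrite (monicP (char_poly_monic A)) scale1r in Hs.
have := @stein_step _ _ _ A M s D HD.
have -> : \prod_(l <- s) (A - l%:M) = 0.
  rewrite -(Cayley_Hamilton A) Hs rmorph_prod; apply: eq_bigr => l _.
  by rewrite rmorphB /= horner_mx_X horner_mx_C.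
rewrite !mul0mx => /esym H0.
have U : \prod_(l <- s) (1%:M - l *: M) \in unitmx.
  rewrite unitmxE unitfE (big_morph _ (@det_mulmx _ _) (det1 _ _)).
  rewrite prodf_seq_neq0; apply/allP => l Hl; apply: H.
  have : root (char_poly A) l by rewrite Hs root_prod_XsubC.
  move=> /eqP; rewrite char_poly_hornerE => H1.
  by rewrite -opprB -scaleN1r detZ H1 mulr0.
by rewrite -[D]mulmx1 -(mulmxV U) mulmxA H0 mul0mx.
Qed.

Lemma fullcol (R : fieldType) p q (X : 'M[R]_(p, q)) : \rank X = q ->
  forall k (Y Y' : 'M[R]_(q, k)), X *m Y = X *m Y' -> Y = Y'.
Proof.
move=> rk k Y Y' E.
have rf : row_free X^T by rewrite /row_free mxrank_tr rk.
apply: trmx_inj; apply: (row_free_inj rf).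
by rewrite -!trmx_mul E.
Qed.

Lemma pinv_left (R : rcfType) p q (X : 'M[R]_(p, q)) : \rank X = q ->
  (exists Y, penrose X Y) -> pinv X *m X = 1%:M.
Proof.
move=> rk ex; rewrite /pinv; case: excluded_middle_informative => [H|//].
case: constructive_indefinite_description => Y [h1 _ _ _] /=.
apply: (@fullcol _ _ _ X rk); by rewrite mulmxA h1 mulmx1.
Qed.

Lemma cmxE (R : rcfType) p q (M : 'M[R]_(p, q)) :
  cmx M = map_mx (real_complex R) M.
Proof. by []. Qed.
Lemma cmx1 (R : rcfType) n : cmx (1%:M : 'M[R]_n) = 1%:M.
Proof.
by apply/matrixP => i j; rewrite !mxE; case: (i == j) => /=; [exact: rmorph1 | exact: rmorph0].
Qed.
Lemma cmxM (R : rcfType) p q k (X : 'M[R]_(p, q)) (Y : 'M[R]_(q, k)) :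
  cmx (X *m Y) = cmx X *m cmx Y.
Proof. rewrite !cmxE. exact: map_mxM. Qed.
Lemma cmx_tr (R : rcfType) p q (X : 'M[R]_(p, q)) : cmx X^T = (cmx X)^T.
Proof. by rewrite !cmxE map_trmx. Qed.
Lemma cmx_eq0 (R : rcfType) p q (X : 'M[R]_(p, q)) : cmx X = 0 -> X = 0.
Proof.
move=> E; apply/matrixP => i j; move/matrixP: E => /(_ i j); rewrite !mxE.
by move/eqP; rewrite (inj_eq (@complexI _)) => /eqP.
Qed.

Lemma trI (F : fieldType) r (l : F) (X : 'M[F]_r) : (1%:M - l *: X)^T = 1%:M - l *: X^T.
Proof. by apply/matrixP => i j; rewrite !mxE eq_sym. Qed.

Lemma stein_real (R : rcfType) n r (A : 'M[R]_n) (M M' : 'M[R]_r)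
   (D : 'M[R]_(n, r)) :
  spec_disjoint A 1%:M 1%:M M -> (M' = M \/ M' = M^T) ->
  A *m D *m M' = D -> D = 0.
Proof.
move=> hs hM hD; apply: cmx_eq0.
apply: (@stein0 _ _ _ (cmx A) (cmx M')).
  move=> l hl; apply/eqP => hl2; apply: (hs (Some l)); split => /=.
    by rewrite cmx1 scalemx1.
  rewrite cmx1.
  case: hM hl2 => ->; first by [].
  by move=> hl2; rewrite -hl2 -det_tr cmx_tr trI.
by rewrite -!cmxM hD.
Qed.

Lemma unit_of_eig (R : rcfType) r (Ah : 'M[R]_r) :
  (forall l, eigenvalue (cmx Ah) l -> 0 < `|l| < 1) -> Ah \in unitmx.
Proof.
move=> h; rewrite unitmxE unitfE; apply/negP => /eqP d0.
have : eigenvalue (cmx Ah) 0.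
  rewrite eigenvalue_root_char /root horner_coef0 char_poly_det.
  by rewrite cmxE det_map_mx d0 rmorph0 mulr0.
by move/h; rewrite normr0 ltxx.
Qed.

Lemma pinv_unit (R : rcfType) r (X : 'M[R]_r) : X \in unitmx -> pinv X *m X = 1%:M.
Proof.
move=> U; apply: pinv_left; first exact: mxrank_unit.
exists (invmx X); split.
- by rewrite mulmxV // mul1mx.
- by rewrite mulVmx // mul1mx.
- by rewrite mulmxV // trmx1.
- by rewrite mulVmx // trmx1.
Qed.

Theorem theorem1 (R : rcfType) (n m r N : nat)
  (A : 'M[R]_n) (B : 'M[R]_(n, m))
  (HA : forall l : R[i], eigenvalue (cmx A) l -> `|l| < 1)
  (HN : (n + m <= N)%N)
  (x1 x2 : 'I_N -> 'cV[R]_n) (u1 : 'I_N -> 'cV[R]_m)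
  (Hx : forall i, x2 i = A *m x1 i + B *m u1 i)
  (Z2 : 'M[R]_(N, n)) (ZB : 'M[R]_(m, N)) (UB : 'M[R]_(N, n))
  (Ah : 'M[R]_r) (Bh : 'M[R]_(r, m)) (Ch : 'M[R]_(n, r))
  (P Q : 'M[R]_r) (Rm Sm : 'M[R]_(n, r)) (SB : 'M[R]_(m, r))
  (Rs Ss : 'M[R]_(n, r)) :
  let X1 : 'M[R]_(N, n) := \matrix_(i < N) (x1 i)^T in
  let X2 : 'M[R]_(N, n) := \matrix_(i < N) (x2 i)^T in
  let U1 : 'M[R]_(N, m) := \matrix_(i < N) (u1 i)^T in
  let Xp := pinv X1 in
  X2 *m X1^T = X1 *m Z2^T + U1 *m ZB ->
  X1 *m UB^T = X1 *m X2^T - Z2 *m X1^T ->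
  (* (a1)-(a4) *)
  regular_pencil (Xp *m Z2) (Xp *m X1) ->
  spec_disjoint (Xp *m Z2) (Xp *m X1) 1%:M Ah ->
  regular_pencil (Xp *m (X2 - UB)) (Xp *m X1) ->
  spec_disjoint (Xp *m (X2 - UB)) (Xp *m X1) 1%:M Ah ->
  (* (A2) *)
  (forall l : R[i], eigenvalue (cmx Ah) l -> 0 < `|l| < 1) ->
  (* (b1)-(b3) *)
  \rank (row_mx X1 U1) = (n + m)%N ->
  \rank X1 = n ->
  \rank U1 = m ->
  Ah *m P *m Ah^T + Bh *m Bh^T = P ->
  Ah^T *m Q *m Ah + Ch^T *m Ch = Q ->
  Xp *m Z2 *m Rm *m Ah^T + Xp *m ZB^T *m Bh^T = Xp *m X1 *m Rm ->
  Xp *m (X2 - UB) *m Sm *m Ah - Xp *m X1 *m Ch = Xp *m X1 *m Sm ->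
  U1 *m SB = UB *m Sm ->
  A *m Rs *m Ah^T + B *m Bh^T = Rs ->
  A^T *m Ss *m Ah - Ch = Ss ->
  [/\ 2%:R *: (Q *m Ah *m P + (Sm^T *m Rm - SB^T *m Bh^T) *m (pinv Ah)^T)
        = 2%:R *: (Q *m Ah *m P + Ss^T *m A *m Rs),
      2%:R *: (SB^T + Q *m Bh) = 2%:R *: (Ss^T *m B + Q *m Bh)
    & 2%:R *: (Ch *m P - Rm) = 2%:R *: (Ch *m P - Rs)].
Proof.
move=> X1 X2 U1 Xp h1 h2 hr1 hs1 hr2 hs2 hA2 rk rkX rkU hP hQ hR hS hSB hRs hSs.
have hX2 : X2 = X1 *m A^T + U1 *m B^T.
  apply/row_matrixP => i.
  by rewrite linearD /= !row_mul /X1 /X2 /U1 !rowK Hx linearD /= !trmx_mul.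
have hXX : Xp *m X1 = 1%:M.
  move: hr1; rewrite /Xp /pinv; case: excluded_middle_informative => [H|H].
    case: constructive_indefinite_description => Y [e1 _ _ _] /= _.
    by apply: (@fullcol _ _ _ X1 rkX); rewrite mulmxA e1 mulmx1.
  case: (posnP n) => [n0|n0].
    by move=> _; apply/matrixP => i; have := ltn_ord i; rewrite {2}n0.
  rewrite /regular_pencil !mul0mx map_mx0 scaler0 subr0.
  by rewrite -(scale0r (1%:M : 'M[{poly R}]_n)) detZ expr0n eqn0Ngt n0 mul0r eqxx.
have [hZ2 hZB] : Z2^T = A^T *m X1^T /\ ZB = B^T *m X1^T.
  apply: eq_col_mx; apply: (@fullcol _ _ _ (row_mx X1 U1) rk).
  by rewrite !mul_row_col -h1 hX2 mulmxDl !mulmxA.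
have {}hZ2 : Z2 = X1 *m A by rewrite -[Z2]trmxK hZ2 trmx_mul !trmxK.
have hUB : UB = U1 *m B^T.
  apply: trmx_inj; apply: (@fullcol _ _ _ X1 rkX).
  rewrite h2 hX2 hZ2 linearD /= !trmx_mul !trmxK mulmxDr !mulmxA.
  by rewrite addrC addKr.
have hSB' : SB = B^T *m Sm.
  by apply: (@fullcol _ _ _ U1 rkU); rewrite hSB hUB mulmxA.
have hXB : X2 - UB = X1 *m A^T by rewrite hX2 hUB addrK.
rewrite hZ2 hZB hXB !trmx_mul !trmxK !mulmxA !hXX !mul1mx in hR hS hs1 hs2.
have eR : Rm = Rs.
  apply/eqP; rewrite -subr_eq0; apply/eqP.
  apply: (@stein_real _ _ _ A Ah Ah^T _ hs1 (or_intror erefl)).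
  have e1 : A *m Rm *m Ah^T = Rm - B *m Bh^T by rewrite -[in RHS]hR addrK.
  have e2 : A *m Rs *m Ah^T = Rs - B *m Bh^T by rewrite -[in RHS]hRs addrK.
  by rewrite mulmxBr mulmxBl e1 e2 opprB addrA subrK.
have eS : Sm = Ss.
  apply/eqP; rewrite -subr_eq0; apply/eqP.
  apply: (@stein_real _ _ _ A^T Ah Ah _ hs2 (or_introl erefl)).
  have e1 : A^T *m Sm *m Ah = Sm + Ch by rewrite -[in RHS]hS subrK.
  have e2 : A^T *m Ss *m Ah = Ss + Ch by rewrite -[in RHS]hSs subrK.
  by rewrite mulmxBr mulmxBl e1 e2 opprD addrACA subrr addr0.
have hAh := @pinv_unit R r Ah (@unit_of_eig R r Ah hA2).
rewrite hSB' eR eS; split => //.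
- congr (_ *: (_ + _)).
  rewrite trmx_mul trmxK -(mulmxA Ss^T B) -mulmxBr.
  have e1 : Rs - B *m Bh^T = A *m Rs *m Ah^T by rewrite -{1}hRs addrK.
  by rewrite e1 -!mulmxA -trmx_mul hAh trmx1 mulmx1 !mulmxA.
- by rewrite trmx_mul trmxK.
Qed.
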